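(* Let $(K_n,\Sigma)$ be a signed complete graph with $n\geq4$. For a sign $\Gamma\subseteq E(K_n)$, let $X(\Gamma)$ be the set of edges $vw$ of $K_n$ such that the triangle $uvw$ is even in $(K_n,\Gamma)$ for every $u\in V(K_n)\setminus\{v,w\}$, and let $Y(\Gamma)$ be the set of edges $vw$ of $K_n$ such that for every $u\in V(K_n)\setminus\{v,w\}$, $uvw$ is odd in $(K_n,\Gamma)$ and the number of odd triangles of $(K_n,\Gamma)$ containing $u$ and $v$ is one more than the number of even triangles of $(K_n,\Gamma)$ containing $u$ and $v$. If $Y(\Sigma)\neq\emptyset$, then $X(\Sigma)\cup Y(\Sigma)=X(\Sigma\triangle Y(\Sigma))$ and $Y(\Sigma\triangle Y(\Sigma))=\emptyset$.
   Context: A signed graph is a pair $(G,\Sigma)$ with $G$ a finite simple graph and $\Sigma\subseteq E(G)$ (the odd edges). A triangle $uvw$ is odd (resp. even) in $(G,\Sigma)$ if $|\Sigma\cap\{uv,uw,vw\}|$ is odd (resp. even). $\triangle$ denotes symmetric difference. *)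

(* Defs.v *)
From mathcomp Require Import all_boot.
Set Implicit Arguments. Unset Strict Implicit. Unset Printing Implicit Defensive.

Definition edges (n : nat) : {set {set 'I_n}} :=
  [set e : {set 'I_n} | #|e| == 2].

(* A sign is a set of edges (the odd edges). *)
Definition odd_tri n (G : {set {set 'I_n}}) (u v w : 'I_n) : bool :=
  odd #|G :&: [set [set u; v]; [set u; w]; [set v; w]]|.

Definition n_odd_tri n (G : {set {set 'I_n}}) (u v : 'I_n) : nat :=
  #|[set x : 'I_n | (x != u) && (x != v) && odd_tri G u v x]|.
Definition n_even_tri n (G : {set {set 'I_n}}) (u v : 'I_n) : nat :=
  #|[set x : 'I_n | (x != u) && (x != v) && ~~ odd_tri G u v x]|.

Definition Xset n (G : {set {set 'I_n}}) : {set {set 'I_n}} :=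
  [set e in edges n | [forall v, forall w, (e == [set v; w]) ==>
     [forall u, ((u != v) && (u != w)) ==> ~~ odd_tri G u v w]]].

(* For an edge e = vw: for every u outside {v,w}, uvw is odd and
   #odd triangles through u,v = #even triangles through u,v + 1.
   The condition is required for every labelling e = {v,w}. *)
Definition Yset n (G : {set {set 'I_n}}) : {set {set 'I_n}} :=
  [set e in edges n | [forall v, forall w, (e == [set v; w]) ==>
     [forall u, ((u != v) && (u != w)) ==>
        (odd_tri G u v w && (n_odd_tri G u v == (n_even_tri G u v).+1))]]].

Definition symdiff (T : finType) (A B : {set T}) : {set T} := (A :\: B) :|: (B :\: A).

(* Main.v *)
Require Import Defs.
From mathcomp Require Import all_boot.
From mathcomp Require Import zify.
Set Implicit Arguments. Unset Strict Implicit. Unset Printing Implicit Defensive.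

Lemma oddU1 (T:finType) (G B : {set T}) (A : T) : A \notin B ->
  odd #|G :&: (A |: B)| = (A \in G) (+) odd #|G :&: B|.
Proof.
move=> AB; case AG: (A \in G).
- have -> : G :&: (A |: B) = A |: (G :&: B).
    by apply/setP=> x; rewrite !inE; case: eqP => // ->; rewrite AG.
  by rewrite cardsU1 inE (negbTE AB) andbF.
- have -> : G :&: (A |: B) = G :&: B.
    by apply/setP=> x; rewrite !inE; case: eqP => // ->; rewrite AG.
  by [].
Qed.

Lemma eq_set2_mem (T:finType) (a b c d : T) : [set a; b] = [set c; d] -> (a == c) || (a == d).
Proof. move=> E; have: a \in [set c; d] by rewrite -E !inE eqxx. by rewrite !inE. Qed.

Lemma set2C (T:finType) (a b : T) : [set a; b] = [set b; a].
Proof. by apply/setP=> x; rewrite !inE orbC. Qed.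

Lemma oddE n (G : {set {set 'I_n}}) u v w : u != v -> u != w -> v != w ->
  odd_tri G u v w = ([set u; v] \in G) (+) ([set u; w] \in G) (+) ([set v; w] \in G).
Proof.
move=> uv uw vw; rewrite /odd_tri.
have -> : [set [set u; v]; [set u; w]; [set v; w]] =
   [set u; v] |: ([set u; w] |: ([set v; w] |: set0)).
  by apply/setP=> x; rewrite !inE orbF orbA.
have ne : forall (a b c d : 'I_n), ~~ ((a == c) || (a == d)) -> [set a; b] != [set c; d].
  by move=> a b c d H; apply/negP => /eqP /eq_set2_mem; apply/negP.
rewrite oddU1; last first.
  rewrite !inE orbF negb_or; apply/andP; split.
    by rewrite set2C; apply: ne; rewrite negb_or (eq_sym v u) uv vw.
  by apply: ne; rewrite negb_or uv uw.
rewrite oddU1; last first.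
  rewrite !inE orbF; apply: ne; by rewrite negb_or uv uw.
rewrite oddU1; last by rewrite inE.
rewrite setI0 cards0 /= addbF; by rewrite addbA.
Qed.

Lemma odd_sym1 n (G : {set {set 'I_n}}) u v w : odd_tri G u v w = odd_tri G v u w.
Proof.
rewrite /odd_tri; congr (odd #|_ :&: _|); apply/setP=> x.
rewrite !inE (set2C v u); by case: (x == [set u; v]); case: (x == [set u; w]); case: (x == [set v; w]).
Qed.

Lemma odd_sym2 n (G : {set {set 'I_n}}) u v w : odd_tri G u v w = odd_tri G u w v.
Proof.
rewrite /odd_tri; congr (odd #|_ :&: _|); apply/setP=> x.
rewrite !inE (set2C w v); by case: (x == [set u; v]); case: (x == [set u; w]); case: (x == [set v; w]).
Qed.

Lemma odd_sym3 n (G : {set {set 'I_n}}) u v w : odd_tri G u v w = odd_tri G w u v.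
Proof. by rewrite odd_sym2 odd_sym1. Qed.

Lemma odd_sym4 n (G : {set {set 'I_n}}) u v w : odd_tri G u v w = odd_tri G v w u.
Proof. by rewrite odd_sym1 odd_sym2. Qed.

Lemma odd_even n (G : {set {set 'I_n}}) u v : u != v ->
  n_odd_tri G u v + n_even_tri G u v = n - 2.
Proof.
move=> uv; rewrite /n_odd_tri /n_even_tri.
set C := [set x : 'I_n | (x != u) && (x != v)].
set P := [set x : 'I_n | odd_tri G u v x].
have -> : [set x | (x != u) && (x != v) && odd_tri G u v x] = C :&: P.
  by apply/setP=> x; rewrite !inE.
have -> : [set x | (x != u) && (x != v) && ~~ odd_tri G u v x] = C :\: P.
  by apply/setP=> x; rewrite !inE andbC.
rewrite cardsID.
have -> : C = ~: [set u; v] by apply/setP=> x; rewrite !inE negb_or.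
have := cardsC [set u; v]; rewrite cards2 uv card_ord. lia.
Qed.

Lemma Yelim n (G : {set {set 'I_n}}) v w u : [set v; w] \in Yset G -> u != v -> u != w ->
  odd_tri G u v w /\ n_odd_tri G u v = (n_even_tri G u v).+1.
Proof.
move/setIdP=> [_ /forallP /(_ v) /forallP /(_ w) /implyP /(_ (eqxx _)) /forallP /(_ u) /implyP H] uv uw.
by move: (H (introT andP (conj uv uw))) => /andP [-> /eqP].
Qed.

Lemma Ycnt n (G : {set {set 'I_n}}) v w u : [set v; w] \in Yset G -> u != v -> u != w ->
  (n_odd_tri G u v).*2 = n - 1.
Proof.
move=> Y uv uw; have [_ E] := Yelim Y uv uw; have := odd_even G uv. lia.
Qed.

Lemma Xelim n (G : {set {set 'I_n}}) v w u : [set v; w] \in Xset G -> u != v -> u != w ->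
  ~~ odd_tri G u v w.
Proof.
move/setIdP=> [_ /forallP /(_ v) /forallP /(_ w) /implyP /(_ (eqxx _)) /forallP /(_ u) /implyP H] uv uw.
exact: (H (introT andP (conj uv uw))).
Qed.

Lemma set2_cases (T : finType) (v w a b : T) : v != w -> [set v; w] = [set a; b] ->
  (a = v /\ b = w) \/ (a = w /\ b = v).
Proof.
move=> vw E.
have: a \in [set v; w] by rewrite E !inE eqxx.
have: b \in [set v; w] by rewrite E !inE eqxx orbT.
rewrite !inE => /orP [/eqP bv | /eqP bw] /orP [/eqP av | /eqP aw]; subst.
- have: w \in [set v; v] by rewrite -E !inE eqxx orbT.
  by rewrite !inE orbb eq_sym (negbTE vw).
- by right.
- by left.
- have: v \in [set w; w] by rewrite -E !inE eqxx.
  by rewrite !inE orbb (negbTE vw).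
Qed.

Lemma Xintro n (G : {set {set 'I_n}}) v w : v != w ->
  (forall u, u != v -> u != w -> ~~ odd_tri G u v w) -> [set v; w] \in Xset G.
Proof.
move=> vw H; rewrite inE; apply/andP; split; first by rewrite inE cards2 vw.
apply/forallP=> a; apply/forallP=> b; apply/implyP=> /eqP E.
apply/forallP=> c; apply/implyP=> /andP [ca cb].
case: (set2_cases vw E) => [[-> ->] | [-> ->]] in ca cb *; first by apply: H.
by rewrite odd_sym2; apply: H.
Qed.

Lemma edgesP n (e : {set 'I_n}) : e \in edges n -> exists v w, v != w /\ e = [set v; w].
Proof. by rewrite inE => /cards2P. Qed.

Lemma edges2 n (v w : 'I_n) : [set v; w] \in edges n -> v != w.
Proof. by rewrite inE cards2; case: (v != w). Qed.

Lemma Yedge n (G : {set {set 'I_n}}) e : e \in Yset G -> e \in edges n.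
Proof. by case/setIdP. Qed.

Lemma Xedge n (G : {set {set 'I_n}}) e : e \in Xset G -> e \in edges n.
Proof. by case/setIdP. Qed.

Lemma symdiffE (T : finType) (A B : {set T}) x : (x \in symdiff A B) = (x \in A) (+) (x \in B).
Proof. by rewrite /symdiff !inE; case: (x \in A); case: (x \in B). Qed.

Lemma odd_symdiff n (G H : {set {set 'I_n}}) u v w : u != v -> u != w -> v != w ->
  odd_tri (symdiff G H) u v w = odd_tri G u v w (+) odd_tri H u v w.
Proof.
move=> uv uw vw; rewrite !oddE // !symdiffE.
by case: ([set u; v] \in G); case: ([set u; w] \in G); case: ([set v; w] \in G);
   case: ([set u; v] \in H); case: ([set u; w] \in H); case: ([set v; w] \in H).
Qed.

Lemma odd_sym5 n (G : {set {set 'I_n}}) u v w : odd_tri G u v w = odd_tri G w v u.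
Proof. by rewrite odd_sym1 odd_sym2 odd_sym1. Qed.

Ltac osym h := first [ exact h | rewrite odd_sym1; exact h | rewrite odd_sym2; exact h
  | rewrite odd_sym3; exact h | rewrite odd_sym4; exact h | rewrite odd_sym5; exact h ].

Lemma n_odd_sym n (G : {set {set 'I_n}}) u v : n_odd_tri G u v = n_odd_tri G v u.
Proof.
rewrite /n_odd_tri; apply: eq_card => x; rewrite !inE odd_sym1.
by case: (x != u); case: (x != v).
Qed.

Lemma matchL n (G : {set {set 'I_n}}) v w x : 3 < n ->
  [set v; w] \in Yset G -> [set v; x] \in Yset G -> w = x.
Proof.
move=> n4 Y1 Y2; apply/eqP; apply/negPn/negP => wx.
have vw := edges2 (Yedge Y1); have vx := edges2 (Yedge Y2).
have xv : x != v by rewrite eq_sym.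
have xw : x != w by rewrite eq_sym.
have [_ E] := Yelim Y1 xv xw.
have E0 : n_even_tri G x v = 0.
  apply/eqP; rewrite cards_eq0; apply/eqP/setP => y; rewrite !inE.
  apply/negbTE/negP => /andP [/andP [yx yv] /negP]; apply.
  have [h _] := Yelim Y2 yv yx. osym h.
have := odd_even G xv. lia.
Qed.

Lemma oddMY n (S : {set {set 'I_n}}) u v w : 3 < n -> u != v -> u != w -> v != w ->
  odd_tri (Yset S) u v w =
  [|| [set u; v] \in Yset S, [set u; w] \in Yset S | [set v; w] \in Yset S].
Proof.
move=> n4 uv uw vw; rewrite oddE //.
have c12 : ([set u;v] \in Yset S) && ([set u;w] \in Yset S) = false.
  apply/negbTE/negP => /andP [h1 h2]. by rewrite (matchL n4 h1 h2) eqxx in vw.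
have c13 : ([set u;v] \in Yset S) && ([set v;w] \in Yset S) = false.
  apply/negbTE/negP => /andP [h1 h2]. rewrite set2C in h1.
  by rewrite (matchL n4 h1 h2) eqxx in uw.
have c23 : ([set u;w] \in Yset S) && ([set v;w] \in Yset S) = false.
  apply/negbTE/negP => /andP [h1 h2]. rewrite set2C in h1. rewrite set2C in h2.
  by rewrite (matchL n4 h1 h2) eqxx in uv.
move: c12 c13 c23.
by case: ([set u;v] \in Yset S); case: ([set u;w] \in Yset S); case: ([set v;w] \in Yset S).
Qed.

Lemma Yodd n (G : {set {set 'I_n}}) a b c : [set a; b] \in Yset G -> c != a -> c != b ->
  odd_tri G c a b.
Proof. by move=> Y ca cb; have [] := Yelim Y ca cb. Qed.

Lemma XsubX' n (S : {set {set 'I_n}}) e : 3 < n -> e \in Xset S -> e \in Xset (symdiff S (Yset S)).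
Proof.
move=> n4 X; case/edgesP: (Xedge X) => v [w [vw E]]; subst e.
apply: Xintro => // u uv uw.
rewrite odd_symdiff // (negbTE (Xelim X uv uw)) /= oddMY //.
have XX := Xelim X uv uw.
have vu : v != u by rewrite eq_sym.
have wu : w != u by rewrite eq_sym.
have wv : w != v by rewrite eq_sym.
apply/negP => /orP [h | /orP [h | h]]; move/negP: XX; apply.
- have o := Yodd h wu wv; osym o.
- have o := Yodd h vu vw; osym o.
- have o := Yodd h uv uw; osym o.
Qed.

Lemma YsubX' n (S : {set {set 'I_n}}) e : 3 < n -> e \in Yset S -> e \in Xset (symdiff S (Yset S)).
Proof.
move=> n4 Y; case/edgesP: (Yedge Y) => v [w [vw E]]; subst e.
apply: Xintro => // u uv uw.
by rewrite odd_symdiff // (Yodd Y uv uw) oddMY // Y !orbT.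
Qed.

Lemma ar1 (b : bool) k m n : k.*2 = n - 1 -> 3 < n -> k = b + m -> 0 < m.
Proof. lia. Qed.
Lemma ar2 k n : k.*2 = n - 1 -> k <= 2 -> 3 < n -> n = 5.
Proof. lia. Qed.
Lemma ar3 a c n : a + c = n -> a <= 4 -> n = 5 -> 0 < c.
Proof. lia. Qed.
Lemma ar4 k e n : k.*2 = n - 1 -> k + e = n - 2 -> n = 5 -> 2 <= e -> False.
Proof. lia. Qed.
Lemma ar5 k k' n : k.*2 = n - 1 -> n = 5 -> 3 <= k' -> k' <= k -> False.
Proof. lia. Qed.

Lemma key n (S : {set {set 'I_n}}) v w u : 3 < n ->
  [set v; w] \in Xset (symdiff S (Yset S)) -> [set v; w] \notin Yset S ->
  u != v -> u != w -> v != w -> [set u; v] \in Yset S -> False.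
Proof.
move=> n4 X nM uv uw vw h.
have vu : [set v; u] \in Yset S by rewrite set2C.
have wv : w != v by rewrite eq_sym.
have wu : w != u by rewrite eq_sym.
have vu' : v != u by rewrite eq_sym.
set Ss := [set x | (x != w) && (x != v) && odd_tri S w v x].
have cS : #|Ss|.*2 = n - 1 := Ycnt vu wv wu.
have memS : forall x, x \in Ss -> ([set v; x] \in Yset S) || ([set w; x] \in Yset S).
  move=> x; rewrite inE => /andP [/andP [xw xv] o].
  have o' : odd_tri S x v w by osym o.
  have := Xelim X xv xw; rewrite odd_symdiff // o'.
  case oM : (odd_tri (Yset S) x v w) => // _.
  move: oM; rewrite oddMY // => /orP [h1 | /orP [h1 | h1]].
  - by rewrite set2C h1.
  - by rewrite [ [set w; x] ]set2C h1 orbT.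
  - by rewrite h1 in nM.
have vx_u : forall x, [set v; x] \in Yset S -> x = u.
  by move=> x hx; apply: (matchL n4 hx vu).
have : 0 < #|Ss :\ u|.
  exact: (ar1 cS n4 (cardsD1 u Ss)).
rewrite card_gt0 => /set0Pn [z]; rewrite in_setD1 => /andP [zu zS].
have wz : [set w; z] \in Yset S.
  case/orP: (memS z zS) => // hz. by rewrite (vx_u z hz) eqxx in zu.
have sub : Ss \subset [set u; z].
  apply/subsetP => x xS; rewrite !inE; case/orP: (memS x xS) => hx.
  - by rewrite (vx_u x hx) eqxx.
  - by rewrite (matchL n4 hx wz) eqxx orbT.
have cS2 : #|Ss| <= 2.
  by have := subset_leq_card sub; rewrite cards2 eq_sym zu.
have n5 : n = 5 := ar2 cS cS2 n4.
have wz' := edges2 (Yedge wz).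
have zv : z != v by move: zS; rewrite inE => /andP [/andP [_ ->]].
set A := [set v; w; u; z].
have cA : #|A| <= 4.
  have -> : A = v |: (w |: (u |: [set z])) by apply/setP => y; rewrite !inE !orbA.
  rewrite !cardsU1 cards1; case: (v \notin _); case: (w \notin _); case: (u \notin _); done.
have : 0 < #|~: A| by have := cardsC A; rewrite card_ord => h0; exact: (ar3 h0 cA n5).
rewrite card_gt0 => /set0Pn [x]; rewrite !inE !negb_or => /andP [/andP [/andP [xv xw] xu] xz].
have xS : x \notin Ss.
  apply/negP => /(subsetP sub); by rewrite !inE (negbTE xu) (negbTE xz).
have ex : ~~ odd_tri S w v x.
  by move: xS; rewrite inE xw xv.
have cx := Ycnt vu xv xu.
have ex2 := odd_even S xv.
have oxz : odd_tri S x v z.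
  apply/negPn/negP => nz.
  have : [set w; z] \subset [set y | (y != x) && (y != v) && ~~ odd_tri S x v y].
    apply/subsetP => y; rewrite !inE => /orP [/eqP -> | /eqP ->].
    - rewrite eq_sym xw wv /=. by rewrite odd_sym5.
    - by rewrite eq_sym xz zv nz.
  move/subset_leq_card; rewrite cards2 wz' -/(n_even_tri S x v).
  exact: (ar4 cx ex2 n5).
have cz := Ycnt vu zv zu.
have : [set u; w; x] \subset [set y | (y != z) && (y != v) && odd_tri S z v y].
  apply/subsetP => y; rewrite !inE => /orP [/orP [/eqP -> | /eqP ->] | /eqP ->].
  - by rewrite eq_sym zu uv (Yodd vu zv zu).
  - rewrite wz' wv /=. have vz : v != z by rewrite eq_sym.
    have o := Yodd wz vw vz. osym o.
  - rewrite xz xv /=. osym oxz.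
move/subset_leq_card; rewrite -/(n_odd_tri S z v).
have -> : [set u; w; x] = u |: [set w; x] by apply/setP => y; rewrite !inE orbA.
rewrite cardsU1 cards2 !inE negb_or uw (eq_sym u x) xu /= (eq_sym w x) xw.
exact: (ar5 cz n5 (leqnn 3)).
Qed.


Lemma ar6 a m k n : a <= m -> k = true + m -> k.*2 = n - 1 -> a.*2 = n - 1 -> False.
Proof. lia. Qed.

Lemma sub2 n (S : {set {set 'I_n}}) v w a b : 3 < n ->
  [set v; w] \in Yset (symdiff S (Yset S)) -> [set a; b] \in Yset S ->
  a != v -> a != w -> False.
Proof.
move=> n4 Y' fM av aw.
have ab := edges2 (Yedge fM).
have vw := edges2 (Yedge Y').
have va : v != a by rewrite eq_sym.
have wa : w != a by rewrite eq_sym.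
have wv : w != v by rewrite eq_sym.
have vb : v != b.
  apply/negP => /eqP vb; subst b.
  have o := Yodd Y' av aw.
  have X := YsubX' n4 fM.
  move: (Xelim X wa wv) => /negP; apply; osym o.
have X := YsubX' n4 fM.
have cS' := Ycnt Y' av aw.
have cS := Ycnt fM va vb. rewrite n_odd_sym in cS.
set Ts := [set x | (x != a) && (x != v) && odd_tri S a v x].
set Ts' := [set x | (x != a) && (x != v) && odd_tri (symdiff S (Yset S)) a v x].
have bT : b \in Ts.
  rewrite inE eq_sym ab /=. have ba : b != a by rewrite eq_sym.
  rewrite eq_sym vb /=. have o := Yodd fM va vb. osym o.
have sub : Ts' \subset Ts :\ b.
  apply/subsetP => x; rewrite !inE => /andP [/andP [xa xv] o'].
  have xb : x != b.
    apply/negP => /eqP xb; subst x.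
    have := Xelim X va vb. by rewrite odd_sym1 o'.
  rewrite xb xa xv /=.
  have ax : a != x by rewrite eq_sym.
  have vx : v != x by rewrite eq_sym.
  move: o'; rewrite odd_symdiff //.
  case oM : (odd_tri (Yset S) a v x); last by rewrite addbF.
  move=> _; move: oM; rewrite oddMY // => /orP [h | /orP [h | h]].
  - by rewrite (matchL n4 fM h) eqxx in vb.
  - by rewrite (matchL n4 fM h) eqxx in xb.
  - exact: (Yodd h av ax).
have le := subset_leq_card sub.
have cD := cardsD1 b Ts. rewrite bT in cD.
exact: (ar6 le cD cS cS').
Qed.

Lemma X'sub n (S : {set {set 'I_n}}) e : 3 < n ->
  e \in Xset (symdiff S (Yset S)) -> e \notin Yset S -> e \in Xset S.
Proof.
move=> n4 X nM; case/edgesP: (Xedge X) => v [w [vw E]]; subst e.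
apply: Xintro => // u uv uw; apply/negP => o.
have wv : w != v by rewrite eq_sym.
have : odd_tri (Yset S) u v w.
  by move: (Xelim X uv uw); rewrite odd_symdiff // o; case: (odd_tri (Yset S) u v w).
rewrite oddMY // => /orP [h | /orP [h | h]].
- exact: (key n4 X nM uv uw vw h).
- rewrite set2C in X nM. exact: (key n4 X nM uw uv wv h).
- by rewrite h in nM.
Qed.

Lemma part2 n (S : {set {set 'I_n}}) e : 3 < n -> Yset S != set0 ->
  e \in Yset (symdiff S (Yset S)) -> False.
Proof.
move=> n4 /set0Pn [f fM] Y'.
case/edgesP: (Yedge fM) => a [b [ab E]]; subst f.
case/edgesP: (Yedge Y') => v [w [vw E]]; subst e.
case: (boolP ((a != v) && (a != w))) => [/andP [av aw] | ha].
  exact: (sub2 n4 Y' fM av aw).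
case: (boolP ((b != v) && (b != w))) => [/andP [bv bw] | hb].
  rewrite set2C in fM; exact: (sub2 n4 Y' fM bv bw).
have Eab : [set a; b] = [set v; w].
  rewrite negb_and !negbK in ha. rewrite negb_and !negbK in hb.
  apply/setP => x; rewrite !inE.
  case/orP: ha => /eqP ha; case/orP: hb => /eqP hb; subst a b.
  - by rewrite eqxx in ab.
  - by [].
  - by rewrite orbC.
  - by rewrite eqxx in ab.
rewrite Eab in fM.
have X := YsubX' n4 fM.
have : 0 < #|~: [set v; w]|.
  have := cardsC [set v; w]; rewrite cards2 vw card_ord => h.
  by rewrite -(ltn_add2l 2) h addn0; apply: leq_trans n4.
rewrite card_gt0 => /set0Pn [u]; rewrite !inE negb_or => /andP [uv uw].
by move: (Xelim X uv uw); rewrite (Yodd Y' uv uw).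
Qed.

Theorem lemma3p5 (n : nat) (Sigma : {set {set 'I_n}}) :
  4 <= n -> Sigma \subset edges n -> Yset Sigma != set0 ->
  Xset Sigma :|: Yset Sigma = Xset (symdiff Sigma (Yset Sigma)) /\
  Yset (symdiff Sigma (Yset Sigma)) = set0.
Proof.
move=> n4 _ YS; split.
- apply/setP => e; apply/idP/idP.
  + case/setUP => [X | Y]; [exact: XsubX' | exact: YsubX'].
  + move=> X'; case eM: (e \in Yset Sigma); first by rewrite inE eM orbT.
    by rewrite inE (X'sub n4 X' (negbT eM)).
- apply/setP => e; rewrite in_set0; apply/negbTE/negP => Y'.
  exact: (part2 n4 YS Y').
Qed.
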